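(* Let $k\ge2$ and $n\le0$. Then $$\mathcal{F}_{n,k}(x)=\sum_{\substack{j_1,\dots,j_k\ge0\\ j_1+2j_2+\dots+kj_k=|n|+1-k}}(-1)^{J-j_k}\,\frac{J!}{j_1!\,j_2!\cdots j_k!}\,x^{|n|+1-k(1+j_k)},\qquad J=j_1+\dots+j_k,$$ where an empty sum is $0$.
   Context: For $k\ge2$, the polynomials $\mathcal{F}_{n,k}(x)\in\mathbb{Z}[x]$ ($n\in\mathbb{Z}$) are defined by $\mathcal{F}_{1,k}=1$, $\mathcal{F}_{n,k}=0$ for $n=0,-1,\dots,-(k-2)$, and $\mathcal{F}_{n,k}(x)=\sum_{j=1}^{k}x^{k-j}\mathcal{F}_{n-j,k}(x)$ for all $n\in\mathbb{Z}$. This recurrence is used upwards for $n\ge2$, and downwards for $n\le-(k-1)$ as $\mathcal{F}_{n,k}=\mathcal{F}_{n+k,k}-\sum_{j=1}^{k-1}x^j\mathcal{F}_{n+j,k}$. *)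

(* Defs.v *)
From mathcomp Require Import all_boot all_algebra.
Set Implicit Arguments. Unset Strict Implicit. Unset Printing Implicit Defensive.
Import GRing.Theory Num.Theory.
Local Open Scope ring_scope.

(* Nonpositive side (and F_1): aF k j = F_{1-j,k} for j : nat.
     aF k 0 = 1, aF k j = 0 for 1 <= j <= k-1,
     aF k j = aF k (j-k) - sum_{i=1}^{k-1} x^i aF k (j-i)  for j >= k
   (this is exactly the downward recurrence
     F_n = F_{n+k} - sum_{i=1}^{k-1} x^i F_{n+i},  n <= -(k-1)).
   Positive side: cF k i = F_{i-k+2,k} for i : nat.
     cF k i = 0 for i <= k-2, cF k (k-1) = 1,
     cF k i = sum_{j=1}^k x^{k-j} cF k (i-j) for i >= k
   (the upward recurrence for n >= 2). *)

Definition nxt_down (k : nat) (l : seq {poly int}) : {poly int} :=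
  let j := size l in
  if (j < k)%N then (if j == 0%N then 1 else 0)
  else l`_(j - k) - \sum_(1 <= i < k) 'X^i * l`_(j - i).

Definition nxt_up (k : nat) (l : seq {poly int}) : {poly int} :=
  let i := size l in
  if (i < k.-1)%N then 0
  else if i == k.-1 then 1
  else \sum_(1 <= j < k.+1) 'X^(k - j) * l`_(i - j).

Fixpoint tab (nxt : seq {poly int} -> {poly int}) (m : nat) : seq {poly int} :=
  match m with
  | 0 => [:: nxt [::]]
  | m'.+1 => rcons (tab nxt m') (nxt (tab nxt m'))
  end.

Definition aF (k j : nat) : {poly int} := nth 0 (tab (nxt_down k) j) j.
Definition cF (k i : nat) : {poly int} := nth 0 (tab (nxt_up k) i) i.

Definition Fib (k : nat) (n : int) : {poly int} :=
  if n <= 1 then aF k (absz (1 - n)%R) else cF k (absz (n + k%:Z - 2)%R).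

(* 1-based component j_i of a k-tuple j (0 outside 1..k) *)
Definition jc (k M : nat) (j : {ffun 'I_k -> 'I_M}) (i : nat) : nat :=
  match (insub i.-1 : option 'I_k) with Some o => val (j o) | None => 0%N end.

(* Main.v *)
Require Import Defs.
From mathcomp Require Import all_boot all_algebra.
From mathcomp Require Import zify ring.
Import GRing.Theory Num.Theory.
Local Open Scope ring_scope.

Lemma size_tab nxt m : size (tab nxt m) = m.+1.
Proof. by elim: m => //= m IH; rewrite size_rcons IH. Qed.

Lemma nth_tab nxt m i : (i <= m)%N -> nth 0 (tab nxt m) i = nth 0 (tab nxt i) i.
Proof.
elim: m => [|m IH]; first by rewrite leqn0 => /eqP ->.
rewrite leq_eqVlt => /orP [/eqP -> //|Hi].
by rewrite /= nth_rcons size_tab Hi IH.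
Qed.

Lemma tab_last nxt m : nth 0 (tab nxt m.+1) m.+1 = nxt (tab nxt m).
Proof. by rewrite /= nth_rcons size_tab ltnn eqxx. Qed.

Lemma aF0 k : (0 < k)%N -> aF k 0 = 1.
Proof. by rewrite /aF /= /nxt_down /= => ->. Qed.

Lemma aFS k j : aF k j.+1 = nxt_down k (tab (nxt_down k) j).
Proof. by rewrite /aF tab_last. Qed.

Lemma aF_small k t : (1 <= t < k)%N -> aF k t = 0.
Proof.
case: t => // t /andP [_ Ht]; rewrite aFS /nxt_down size_tab Ht //.
Qed.

Lemma aF_rec k t : (0 < k)%N -> (k <= t)%N -> (0 < t)%N ->
  aF k t = aF k (t - k) - \sum_(1 <= i < k) 'X^i * aF k (t - i).
Proof.
move=> Hk0; case: t => // t Hk _; rewrite aFS /nxt_down size_tab ltnNge Hk /=.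
rewrite /aF nth_tab; last by lia.
congr (_ - _); apply: eq_big_nat => i /andP [H1 H2].
by rewrite nth_tab //; lia.
Qed.
Set Implicit Arguments. Unset Strict Implicit.

Definition wt K M (j : {ffun 'I_K -> 'I_M.+1}) := (\sum_(o < K) o.+1 * j o)%N.
Definition tot K M (j : {ffun 'I_K -> 'I_M.+1}) := (\sum_(o < K) j o)%N.
Definition pf K M (j : {ffun 'I_K -> 'I_M.+1}) := (\prod_(o < K) (j o)`!)%N.
Definition mult K M (j : {ffun 'I_K -> 'I_M.+1}) := ((tot j)`! %/ pf j)%N.
Definition dec K M (j : {ffun 'I_K -> 'I_M.+1}) (o : 'I_K) : {ffun 'I_K -> 'I_M.+1} :=
  [ffun o' => if o' == o then inord (j o' - 1) else j o'].
Definition inc K M (j : {ffun 'I_K -> 'I_M.+1}) (o : 'I_K) : {ffun 'I_K -> 'I_M.+1} :=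
  [ffun o' => if o' == o then inord (j o').+1 else j o'].

Lemma decE K M (j : {ffun 'I_K -> 'I_M.+1}) (o o' : 'I_K) :
  (dec j o o' : nat) = if o' == o then (j o' - 1)%N else j o'.
Proof.
rewrite ffunE; case: eqP => // _; rewrite inordK //.
by have := ltn_ord (j o'); lia.
Qed.

Lemma incE K M (j : {ffun 'I_K -> 'I_M.+1}) (o o' : 'I_K) : (j o < M)%N ->
  (inc j o o' : nat) = if o' == o then (j o').+1 else j o'.
Proof.
move=> H; rewrite ffunE; case: eqP => // ->; rewrite inordK //.
Qed.

Lemma le_tot K M (j : {ffun 'I_K -> 'I_M.+1}) (o : 'I_K) : (j o <= tot j)%N.
Proof. by rewrite /tot (bigD1 o) //= leq_addr. Qed.

Lemma le_wt K M (j : {ffun 'I_K -> 'I_M.+1}) (o : 'I_K) : (o.+1 * j o <= wt j)%N.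
Proof. by rewrite /wt (bigD1 o) //= leq_addr. Qed.

Lemma split_sum K (F : 'I_K -> nat) o : (\sum_(o' < K) F o' = F o + \sum_(o' < K | o' != o) F o')%N.
Proof. by rewrite (bigD1 o). Qed.

Lemma tot_dec K M (j : {ffun 'I_K -> 'I_M.+1}) (o : 'I_K) : (0 < j o)%N ->
  tot (dec j o) = (tot j).-1.
Proof.
move=> H; have E : (\sum_(o' < K | o' != o) dec j o o' = \sum_(o' < K | o' != o) j o')%N.
  by apply: eq_bigr => i /negbTE Hi; rewrite decE Hi.
rewrite /tot (split_sum _ o) [in RHS](split_sum _ o) E decE eqxx.
move: (\sum_(o' < K | o' != o) _)%N => S; lia.
Qed.

Lemma wt_dec K M (j : {ffun 'I_K -> 'I_M.+1}) (o : 'I_K) : (0 < j o)%N ->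
  wt (dec j o) = (wt j - o.+1)%N.
Proof.
move=> H; have E : (\sum_(o' < K | o' != o) o'.+1 * dec j o o' = \sum_(o' < K | o' != o) o'.+1 * j o')%N.
  by apply: eq_bigr => i /negbTE Hi; rewrite decE Hi.
rewrite /wt (split_sum _ o) [in RHS](split_sum _ o) E decE eqxx.
move: (\sum_(o' < K | o' != o) _)%N => S.
have HH := leq_pmulr o.+1 H; rewrite mulnBr muln1; lia.
Qed.

Lemma wt_inc K M (j : {ffun 'I_K -> 'I_M.+1}) (o : 'I_K) : (j o < M)%N ->
  wt (inc j o) = (wt j + o.+1)%N.
Proof.
move=> H; have E : (\sum_(o' < K | o' != o) o'.+1 * inc j o o' = \sum_(o' < K | o' != o) o'.+1 * j o')%N.
  by apply: eq_bigr => i /negbTE Hi; rewrite incE // Hi.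
rewrite /wt (split_sum _ o) [in RHS](split_sum _ o) E incE // eqxx.
move: (\sum_(o' < K | o' != o) _)%N => S.
rewrite mulnS; lia.
Qed.

Lemma pf_dec K M (j : {ffun 'I_K -> 'I_M.+1}) (o : 'I_K) : (0 < j o)%N ->
  pf j = (j o * pf (dec j o))%N.
Proof.
move=> H; have E : (\prod_(o' < K | o' != o) (dec j o o')`! = \prod_(o' < K | o' != o) (j o')`!)%N.
  by apply: eq_bigr => i /negbTE Hi; rewrite decE Hi.
rewrite /pf (bigD1 o) // [in RHS](bigD1 o) //= E decE eqxx.
rewrite mulnA; congr (_ * _)%N; rewrite -{1}(prednK H) factS subn1; by rewrite prednK.
Qed.

Lemma pf_gt0 K M (j : {ffun 'I_K -> 'I_M.+1}) : (0 < pf j)%N.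
Proof. by apply: prodn_gt0 => i; apply: fact_gt0. Qed.

Lemma fact_rec K M (j : {ffun 'I_K -> 'I_M.+1}) : (0 < tot j)%N ->
  (tot j)`! = (\sum_(o < K | (0 < j o)%N) j o * (tot j).-1`!)%N.
Proof.
move=> H; rewrite -{1}(prednK H) factS prednK // -big_distrl /=.
congr (_ * _)%N; rewrite /tot [in LHS](bigID (fun o => (0 < j o)%N)) /=.
rewrite [X in (_ + X)%N]big1 ?addn0 // => i; rewrite lt0n negbK => /eqP //.
Qed.

Lemma pf_dvd t : forall K M (j : {ffun 'I_K -> 'I_M.+1}), tot j = t -> (pf j %| t`!)%N.
Proof.
elim: t => [|t IH] K M j Ht.
  rewrite /pf big1 // => o _; have := le_tot j o; rewrite Ht leqn0 => /eqP -> //.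
have Hp : (0 < tot j)%N by rewrite Ht.
rewrite -Ht fact_rec //; apply: dvdn_sum => o Ho.
rewrite (pf_dec Ho) dvdn_pmul2l // Ht; apply: IH; by rewrite tot_dec // Ht.
Qed.

Lemma mult_rec K M (j : {ffun 'I_K -> 'I_M.+1}) : (0 < tot j)%N ->
  mult j = (\sum_(o < K | (0 < j o)%N) mult (dec j o))%N.
Proof.
move=> H; rewrite /mult fact_rec //.
rewrite (eq_bigr (fun o => pf j * ((tot (dec j o))`! %/ pf (dec j o)))%N).
  by rewrite -big_distrr /= mulKn // pf_gt0.
move=> o Ho; rewrite (pf_dec Ho) -mulnA [X in _ = (_ * X)%N]mulnC divnK.
  by rewrite tot_dec.
exact: pf_dvd.
Qed.

Lemma inc_dec K M (j : {ffun 'I_K -> 'I_M.+1}) (o : 'I_K) : (0 < j o)%N ->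
  inc (dec j o) o = j.
Proof.
move=> H; have H1 : (dec j o o < M)%N.
  by rewrite decE eqxx; have := ltn_ord (j o); lia.
apply/ffunP => o'; apply: val_inj => /=; rewrite incE //; case: eqP => [->|/eqP Hne].
  by rewrite decE eqxx; lia.
by rewrite decE (negbTE Hne).
Qed.

Lemma dec_inc K M (j : {ffun 'I_K -> 'I_M.+1}) (o : 'I_K) : (j o < M)%N ->
  dec (inc j o) o = j.
Proof.
move=> H; apply/ffunP => o'; apply: val_inj => /=; rewrite decE; case: eqP => [->|/eqP Hne].
  by rewrite incE // eqxx; lia.
by rewrite incE // (negbTE Hne).
Qed.

Lemma incM K M (j : {ffun 'I_K -> 'I_M.+1}) (o : 'I_K) : (j o : nat) = M ->
  (inc j o o : nat) = 0%N.
Proof.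
move=> H; rewrite ffunE eqxx /inord /insubd insubF //= H; apply/negbTE; by rewrite ltnn.
Qed.

Lemma tot0_wt K M (j : {ffun 'I_K -> 'I_M.+1}) : tot j = 0%N -> wt j = 0%N.
Proof.
move=> H; rewrite /wt big1 // => o _; have := le_tot j o; rewrite H leqn0 => /eqP ->.
by rewrite muln0.
Qed.

Lemma prodq_dec K M (q : 'I_K -> {poly int}) (j : {ffun 'I_K -> 'I_M.+1}) (o : 'I_K) :
  (0 < j o)%N ->
  \prod_(o' < K) q o' ^+ j o' = q o * \prod_(o' < K) q o' ^+ dec j o o'.
Proof.
move=> H; have E : \prod_(o' < K | o' != o) q o' ^+ dec j o o' = \prod_(o' < K | o' != o) q o' ^+ j o'.
  by apply: eq_bigr => i /negbTE Hi; rewrite decE Hi.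
rewrite (bigD1 o) // [in RHS](bigD1 o) //= E decE eqxx mulrA -exprS.
by rewrite subn1 prednK.
Qed.

Definition G K M (q : 'I_K -> {poly int}) (s : nat) : {poly int} :=
  \sum_(j : {ffun 'I_K -> 'I_M.+1} | wt j == s) (mult j)%:R * \prod_(o < K) q o ^+ j o.

Lemma G_rec K M (q : 'I_K -> {poly int}) s : (0 < s)%N -> (s <= M)%N ->
  G M q s = \sum_(o < K | (o.+1 <= s)%N) q o * G M q (s - o.+1).
Proof.
move=> Hs HsM; rewrite /G.
rewrite (eq_bigr (fun j : {ffun 'I_K -> 'I_M.+1} => \sum_(o < K | (0 < j o)%N)
   q o * ((mult (dec j o))%:R * \prod_(o' < K) q o' ^+ dec j o o'))); last first.
  move=> j /eqP Hw; have Ht : (0 < tot j)%N.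
    by rewrite lt0n; apply/eqP => /tot0_wt; lia.
  rewrite mult_rec // natr_sum big_distrl; apply: eq_bigr => o Ho.
  by rewrite (prodq_dec q Ho) mulrCA.
rewrite (exchange_big_dep xpredT) //= [RHS]big_mkcond /=; apply: eq_bigr => o _.
case: ifP => Hos; last first.
  rewrite big_pred0 // => j; apply/negbTE/andP => [[/eqP Hw Hj]].
  have := le_wt j o; have := leq_pmulr o.+1 Hj; move/negbT: Hos; lia.
rewrite big_distrr /= (reindex_onto (fun j' => inc j' o) (fun j => dec j o)); last first.
  by move=> j /andP [_ Hj]; rewrite inc_dec.
apply: eq_big => [j'|j' /andP [_ /eqP ->] //].
have := ltn_ord (j' o); rewrite ltnS leq_eqVlt => /orP [/eqP HM|HM].
  rewrite incM // ltnn andbF /=; apply/esym/negbTE/eqP => Hw.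
  have := le_wt j' o; rewrite HM; have := leq_pmull M (ltn0Sn o); lia.
rewrite wt_inc // dec_inc // eqxx andbT incE // eqxx andbT.
by apply/idP/idP => /eqP Hw; apply/eqP; lia.
Qed.

Definition qq k : 'I_k -> {poly int} := fun o => if (o.+1 < k)%N then - 'X^(o.+1) else 1.
Arguments qq k : clear implicits.

Lemma G0 K M (q : 'I_K -> {poly int}) : G M q 0 = 1.
Proof.
rewrite /G (big_pred1 [ffun => ord0]).
  rewrite /mult /pf /tot !big1 ?mul1r //= => o _; by rewrite ffunE.
move=> j /=; apply/idP/idP => [/eqP Hw|/eqP ->].
  apply/eqP/ffunP => o; apply: val_inj; rewrite ffunE /=.
  by have := le_wt j o; rewrite Hw; lia.
by apply/eqP; rewrite /wt big1 // => o _; rewrite ffunE muln0.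
Qed.

Lemma aF_G k M s : (2 <= k)%N -> (s <= M)%N -> aF k (s + k) = G M (qq k) s.
Proof.
move=> Hk; elim/ltn_ind: s => s IH HsM.
case: (posnP s) => [->|Hs].
  rewrite G0 add0n aF_rec //; try lia.
  rewrite subnn aF0; try lia.
  rewrite big_nat_cond big1 ?subr0 // => i /andP [/andP [H1 H2] _].
  by rewrite aF_small ?mulr0 //; lia.
rewrite G_rec // aF_rec //; try lia.
rewrite addnK [RHS]big_mkcond /=.
case: k Hk IH => // k Hk IH.
rewrite big_ord_recr /= big_add1 /= big_mkord addrC.
congr (_ + _).
  rewrite /qq /= ltnn mul1r; case: ifP => Hks.
    rewrite (_ : s = (s - k.+1) + k.+1)%N; last by lia.
    by rewrite addnK; apply: IH; lia.
  by rewrite aF_small //; move/negbT: Hks; lia.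
rewrite -sumrN; apply: eq_bigr => o _.
case: ifP => Hos.
  rewrite /qq /= ltnS ltn_ord mulNr; congr (- (_ * _)).
  rewrite (_ : (s + k.+1 - o.+1 = (s - o.+1) + k.+1)%N); last by lia.
  by apply: IH; lia.
by rewrite aF_small ?mulr0 ?oppr0 //; move/negbT: Hos; have := ltn_ord o; lia.
Qed.

Lemma jcE k M (j : {ffun 'I_k -> 'I_M}) (o : 'I_k) : jc j o.+1 = j o.
Proof.
rewrite /jc /=; case: insubP => [u _ Hu|]; last by rewrite ltn_ord.
by congr (nat_of_ord (j _)); apply: val_inj.
Qed.

Lemma sum_jc k M (j : {ffun 'I_k -> 'I_M.+1}) :
  (\sum_(1 <= i < k.+1) jc j i)%N = tot j.
Proof. by rewrite big_add1 /= big_mkord; apply: eq_bigr => o _; rewrite jcE. Qed.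

Lemma wsum_jc k M (j : {ffun 'I_k -> 'I_M.+1}) :
  (\sum_(1 <= i < k.+1) i * jc j i)%N = wt j.
Proof. by rewrite big_add1 /= big_mkord; apply: eq_bigr => o _; rewrite jcE. Qed.

Lemma prod_jc k M (j : {ffun 'I_k -> 'I_M.+1}) :
  (\prod_(1 <= i < k.+1) (jc j i)`!)%N = pf j.
Proof. by rewrite big_add1 /= big_mkord; apply: eq_bigr => o _; rewrite jcE. Qed.

Lemma main_m k m : (2 <= k)%N ->
  aF k m.+1 =
  \sum_(j : {ffun 'I_k -> 'I_m.+2} |
          (\sum_(1 <= i < k.+1) i * jc j i + k == m + 1)%N)
     (-1) ^+ (\sum_(1 <= i < k.+1) jc j i - jc j k)%N
     * ((\sum_(1 <= i < k.+1) jc j i)`! %/ \prod_(1 <= i < k.+1) (jc j i)`!)%N%:R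
     * 'X^(m + 1 - k * (1 + jc j k)).
Proof.
case: k => // k Hk; case: (ltnP m.+1 k.+1) => Hmk.
  rewrite aF_small; last by lia.
  by rewrite big_pred0 // => j; apply/negP => /eqP; lia.
have -> : aF k.+1 m.+1 = aF k.+1 ((m.+1 - k.+1) + k.+1) by congr aF; lia.
rewrite (aF_G (M := m.+1)) //; last by lia.
rewrite /G; apply: eq_big => [j|j /eqP Hw].
  by rewrite wsum_jc; apply/idP/idP => /eqP H; apply/eqP; lia.
rewrite !sum_jc prod_jc -/(mult j).
rewrite (jcE j ord_max) big_ord_recr /= /qq ltnn expr1n mulr1.
rewrite (eq_bigr (fun o : 'I_k => (-1) ^+ j (widen_ord (leqnSn k) o) *
     'X ^+ (o.+1 * j (widen_ord (leqnSn k) o))%N)); last first.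
  by move=> o _; rewrite /= ltnS ltn_ord [LHS]exprNn exprM.
rewrite big_split /= !prodrXr.
move: Hw; rewrite /wt /tot !big_ord_recr /= addnK => Hw.
rewrite (_ : (m + 1 - k.+1 * (1 + j ord_max) =
   \sum_(i < k) i.+1 * j (widen_ord (leqnSn k) i))%N); last first.
  by move: Hw; rewrite mulnDr muln1; move: (\sum_(i < k) _)%N (k.+1 * _)%N => S P; lia.
by rewrite mulrCA mulrA.
Qed.

Unset Implicit Arguments.
Theorem mainTheorem7 (k : nat) (n : int) :
  (2 <= k)%N -> n <= 0 ->
  Fib k n =
  \sum_(j : {ffun 'I_k -> 'I_((absz n).+2)} |
          (\sum_(1 <= i < k.+1) i * jc j i + k == (absz n) + 1)%N)
     (-1) ^+ (\sum_(1 <= i < k.+1) jc j i - jc j k)%N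
     * ((\sum_(1 <= i < k.+1) jc j i)`! %/ \prod_(1 <= i < k.+1) (jc j i)`!)%N%:R
     * 'X^((absz n) + 1 - k * (1 + jc j k)).
Proof.
move=> Hk Hn; rewrite -main_m // /Fib.
case: n Hn => [p|p] Hn.
  have -> : p = 0%N by move: Hn; rewrite lez_nat leqn0 => /eqP.
  by [].
have -> : (Negz p <= 1) = true by [].
congr aF; rewrite NegzE opprK; lia.
Qed.
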